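(* Let $f:\{0,1\}^n\to\{0,1\}$ be a Boolean function and $c\in\mathbb{R}^n_{\ge0}$ a cost vector. For every $\varepsilon\in(0,0.5]$ and $\beta>0$, there exists an $\varepsilon$-error online algorithm with unit investment $\beta$ (namely the algorithm Warmup-IPRR$(f,\varepsilon)$ described in the context) whose expected cost satisfies \[ \mathrm{avg\text{-}cost}_c \le \beta n + \frac{\mathrm{opt}^{\mathrm{w}}_0(f,c)}{\varepsilon}\sum_{i=1}^n \mathrm{Inf}_i[f]\left(1+\ln\frac{1}{\mathrm{Inf}_i[f]}\right). \]
   Context: Online priced query model: $f:\{0,1\}^n\to\{0,1\}$ is given; the input $x\in\{0,1\}^n$ and costs $c\in\mathbb{R}^n_{\ge0}$ are unknown. The algorithm maintains investments $\theta\in\mathbb{R}^n_{\ge0}$, initially $0$; each step it increases one $\theta_i$ by $\beta$; $x_i$ is revealed once $\theta_i\ge c_i$. The cost on input $x$ is $\|\theta\|_1$ at halting. Offline algorithms know $c$ and pay $c_i$ to reveal $x_i$. An algorithm is $\varepsilon$-error if $\Pr_{x}[\text{output}\ne f(x)]\le\varepsilon$ for uniform $x$. $\mathrm{avg\text{-}cost}_c$ is the expected cost over uniform $x$; $\mathrm{worst\text{-}cost}_c$ is the max over $x$. $\mathrm{opt}^{\mathrm{w}}_0(f,c)$ is the infimum of worst-case cost over all zero-error algorithms (offline or online). $\mathrm{Inf}_i[f]=\Pr_x[f(x)\ne f(x^{\oplus i})]$ ($x^{\oplus i}$: $x$ with bit $i$ flipped); terms with $\mathrm{Inf}_i[f]=0$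 contribute $0$. For a restriction $\pi$ (partial assignment of variables), $f_\pi$ is the restricted function, and $\mathrm{bias}(g)=\min\{\Pr_x[g(x)\ne0],\Pr_x[g(x)\ne1]\}$. Warmup-IPRR$(f,\varepsilon)$: start with $\theta=0$, $\pi=\emptyset$; while $\mathrm{bias}(f_\pi)>\varepsilon$: pick $i^*\in\arg\max_i \mathrm{Inf}_i[f_\pi]/\theta_i$, increase $\theta_{i^*}$ by $\beta$, and if $x_{i^*}$ is revealed as $b$, add $x_{i^*}\mapsto b$ to $\pi$; finally output $\mathbf{1}\{\mathbb{E}_x[f_\pi(x)]\ge 1/2\}$. *)

(* Defs.v *)
From HB Require Import structures.
From mathcomp Require Import all_boot all_order all_algebra.
From mathcomp Require Import all_classical all_reals.
From mathcomp Require Import ereal exp.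

Set Implicit Arguments.
Unset Strict Implicit.
Unset Printing Implicit Defensive.

Import Order.TTheory GRing.Theory Num.Theory.
Local Open Scope ring_scope.

(** The Boolean cube {0,1}^n (false = 0, true = 1). *)
Definition cube (n : nat) := {ffun 'I_n -> bool}.

Definition avg {R : realType} {n : nat} (g : cube n -> R) : R :=
  (\sum_(x : cube n) g x) / (#|{: cube n}|)%:R.

Definition prob {R : realType} {n : nat} (P : pred (cube n)) : R :=
  avg (fun x => (P x)%:R).

Definition flip {n : nat} (x : cube n) (i : 'I_n) : cube n :=
  [ffun j => if j == i then ~~ x j else x j].

Definition Inf {R : realType} {n : nat} (g : cube n -> bool) (i : 'I_n) : R :=
  prob (fun x => g x != g (flip x i)).

Definition restriction (n : nat) := 'I_n -> option bool.
Definition empty_restr (n : nat) : restriction n := fun _ => None.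

Definition restr_apply {n : nat} (pi : restriction n) (x : cube n) : cube n :=
  [ffun j => if pi j is Some b then b else x j].

Definition frestr {n : nat} (f : cube n -> bool) (pi : restriction n) :
  cube n -> bool := fun x => f (restr_apply pi x).

Definition bias {R : realType} {n : nat} (g : cube n -> bool) : R :=
  Num.min (prob (fun x => g x != false)) (prob (fun x => g x != true)).

Definition expect_bool {R : realType} {n : nat} (g : cube n -> bool) : R :=
  avg (fun x => (g x)%:R).

Definition state (R : realType) (n : nat) : Type :=
  (('I_n -> R) * restriction n)%type.

Definition init_state (R : realType) (n : nat) : state R n :=
  ((fun _ => 0), @empty_restr n).

(** The ratio Inf_i[f_pi] / theta_i, as an extended real: when theta_i = 0
    it is +oo if the influence is positive and 0 if the influence is 0. *)
Definition iprr_ratio {R : realType} {n : nat} (f : cube n -> bool)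
    (s : state R n) (i : 'I_n) : \bar R :=
  let I := Inf (frestr f s.2) i in
  if s.1 i == 0 then (if I == 0 then 0%E else +oo%E) else (I / s.1 i)%:E.

(** A tie-breaking rule for Warmup-IPRR: whenever the loop condition
    bias(f_pi) > eps holds, it selects some i* in argmax_i Inf_i[f_pi]/theta_i. *)
Definition iprr_selector {R : realType} {n : nat} (f : cube n -> bool) (eps : R)
    (sel : state R n -> option 'I_n) : Prop :=
  forall s : state R n, eps < bias (frestr f s.2) ->
    exists2 i, sel s = Some i & forall j, (iprr_ratio f s j <= iprr_ratio f s i)%E.

Definition invest {R : realType} {n : nat} (c : 'I_n -> R) (beta : R)
    (x : cube n) (s : state R n) (i : 'I_n) : state R n :=
  let theta' := fun j => if j == i then s.1 j + beta else s.1 j in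
  let pi' := if c i <= theta' i then
               (fun j => if j == i then Some (x i) else s.2 j)
             else s.2 in
  (theta', pi').

Definition iprr_step {R : realType} {n : nat} (f : cube n -> bool) (c : 'I_n -> R)
    (eps beta : R) (sel : state R n -> option 'I_n) (x : cube n)
    (s : state R n) : state R n :=
  if eps < bias (frestr f s.2) then
    (if sel s is Some i then invest c beta x s i else s)
  else s.

Definition iprr_run {R : realType} {n : nat} (f : cube n -> bool) (c : 'I_n -> R)
    (eps beta : R) (sel : state R n -> option 'I_n) (x : cube n) (k : nat) :
    state R n :=
  iter k (iprr_step f c eps beta sel x) (init_state R n).

Definition iprr_halted {R : realType} {n : nat} (f : cube n -> bool) (eps : R)
    (s : state R n) : Prop :=
  bias (frestr f s.2) <= eps.

Definition iprr_output {R : realType} {n : nat} (f : cube n -> bool)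
    (s : state R n) : bool :=
  ((2 : R)^-1 <= expect_bool (frestr f s.2)).

Definition l1cost {R : realType} {n : nat} (s : state R n) : R :=
  \sum_(i < n) `|s.1 i|.

(** ** Offline algorithms: adaptive decision trees paying c_i per query *)
Inductive dtree (n : nat) : Type :=
  | DLeaf of bool
  | DNode of 'I_n & dtree n & dtree n.  (* query x_i; left if 0, right if 1 *)

Fixpoint dt_eval {n : nat} (t : dtree n) (x : cube n) : bool :=
  match t with
  | DLeaf b => b
  | DNode i t0 t1 => if x i then dt_eval t1 x else dt_eval t0 x
  end.

Fixpoint dt_cost {R : realType} {n : nat} (c : 'I_n -> R) (t : dtree n)
    (x : cube n) : R :=
  match t with
  | DLeaf _ => 0
  | DNode i t0 t1 => c i + (if x i then dt_cost c t1 x else dt_cost c t0 x)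
  end.

Definition dt_zero_error {n : nat} (f : cube n -> bool) (t : dtree n) : Prop :=
  forall x, dt_eval t x = f x.

Definition dt_worst_cost {R : realType} {n : nat} (c : 'I_n -> R) (t : dtree n) : R :=
  \big[Num.max/0]_(x : cube n) dt_cost c t x.

Definition opt0w {R : realType} {n : nat} (f : cube n -> bool) (c : 'I_n -> R) : R :=
  inf [set w : R | exists t : dtree n, dt_zero_error f t /\ w = dt_worst_cost c t].

Definition inf_term {R : realType} (I : R) : R :=
  if I == 0 then 0 else I * (1 + ln (I^-1)).

(* Main.v *)
Require Import Defs.
From HB Require Import structures.
From mathcomp Require Import all_boot all_order all_algebra.
From mathcomp Require Import all_classical all_reals.
From mathcomp Require Import ereal exp.
From mathcomp Require Import lra ring.
Import Order.TTheory GRing.Theory Num.Theory.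
Local Open Scope ring_scope.
Set Implicit Arguments. Unset Strict Implicit. Unset Printing Implicit Defensive.

Section Basics.
Variable R : realType.
Variable n : nat.
Local Notation cube := (cube n).

Definition NN : R := (#|{: cube}|)%:R.

Lemma NN_gt0 : 0 < NN.
Proof.
rewrite /NN ltr0n; apply/card_gt0P; by exists [ffun=> false].
Qed.

Definition mix (D : {set 'I_n}) (x y : cube) : cube :=
  [ffun j => if j \in D then x j else y j].

Lemma mixE D x y j : mix D x y j = if j \in D then x j else y j.
Proof. by rewrite ffunE. Qed.

Lemma mix_mix_l D x y z : mix D (mix D x y) z = mix D x z.
Proof. by apply/ffunP=> j; rewrite !mixE; case: (j \in D). Qed.

Lemma mix_mix_r D x y z : mix D x (mix D y z) = mix D x z.
Proof. by apply/ffunP=> j; rewrite !mixE; case: (j \in D). Qed.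

Lemma mix_id D x : mix D x x = x.
Proof. by apply/ffunP=> j; rewrite !mixE; case: (j \in D). Qed.

Lemma mix_sub (D E : {set 'I_n}) (y x w : cube) : D \subset E -> mix E y (mix D x w) = mix E y w.
Proof.
move=> sDE; apply/ffunP=> j; rewrite !mixE; case: ifP => // jE.
by have -> : (j \in D) = false by apply/negbTE; apply: contraFN jE => /(fintype.subsetP sDE).
Qed.

Definition agree (D : {set 'I_n}) (x x' : cube) := forall j, j \in D -> x' j = x j.

Lemma agree_mix D x y : agree D x (mix D x y).
Proof. by move=> j jD; rewrite mixE jD. Qed.

Definition stopping (Dm : cube -> {set 'I_n}) :=
  forall x x', agree (Dm x) x x' -> Dm x' = Dm x.

Lemma L_lemma (Dm : cube -> {set 'I_n}) (K : cube -> cube -> R) :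
  stopping Dm -> (forall x x' z, agree (Dm x) x x' -> K x' z = K x z) ->
  \sum_x \sum_y K x (mix (Dm x) x y) = NN * \sum_x K x x.
Proof.
move=> stD HK.
rewrite pair_big /=.
pose sg := fun p : cube * cube => (mix (Dm p.1) p.1 p.2, mix (Dm p.1) p.2 p.1).
have sgK : cancel sg sg.
  case=> x y; rewrite /sg /=.
  have -> : Dm (mix (Dm x) x y) = Dm x by apply: stD; apply: agree_mix.
  by rewrite !mix_mix_l !mix_mix_r !mix_id.
rewrite (reindex_inj (can_inj sgK)) /=.
have E : forall p : cube * cube, K (sg p).1 (mix (Dm (sg p).1) (sg p).1 (sg p).2) = K p.1 p.1.
  case=> x y; rewrite /sg /=.
  have -> : Dm (mix (Dm x) x y) = Dm x by apply: stD; apply: agree_mix.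
  rewrite mix_mix_l mix_mix_r mix_id.
  by apply: HK; apply: agree_mix.
rewrite (eq_bigr _ (fun p _ => E p)).
rewrite -(pair_big xpredT xpredT (fun x (_ : cube) => K x x)) /=.
rewrite mulr_sumr; apply: eq_bigr => x _.
by rewrite sumr_const /NN mulr_natl.
Qed.

Lemma mix_unif (D : {set 'I_n}) (G : cube -> R) :
  \sum_x \sum_y G (mix D x y) = NN * \sum_x G x.
Proof.
apply: (L_lemma (Dm := fun _ => D) (K := fun _ z => G z)) => //.
Qed.

End Basics.

Section Proc.
Variable n : nat.
Local Notation cube := (cube n).
Variable S : Type.
Variable dom : S -> {set 'I_n}.
Variable stp : cube -> S -> S.
Variable s0 : S.
Hypothesis A1 : forall x s, dom s \subset dom (stp x s).
Hypothesis A2 : forall x x' s, agree (dom (stp x s)) x x' -> stp x' s = stp x s.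

Definition prun t x := iter t (stp x) s0.

Lemma agree_sub (D E : {set 'I_n}) x x' : D \subset E -> agree E x x' -> agree D x x'.
Proof. by move=> sDE H j jD; apply: H; apply: (fintype.subsetP sDE). Qed.

Lemma prun_mono t u x : (t <= u)%N -> dom (prun t x) \subset dom (prun u x).
Proof.
move=> /subnK <-; elim: (u - t)%N => [|k IH]; first by rewrite add0n.
by rewrite addSn /prun iterS; apply: (fintype.subset_trans IH); apply: A1.
Qed.

Lemma prun_agree t x x' : agree (dom (prun t x)) x x' -> prun t x' = prun t x.
Proof.
elim: t => [//|t IH] H.
rewrite /prun !iterS -/(prun t x') -/(prun t x).
have -> : prun t x' = prun t x.
  apply: IH; apply: agree_sub H; exact: (prun_mono x (leqnSn t)).
by apply: A2.
Qed.

Lemma prun_stopping t : stopping (fun x => dom (prun t x)).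
Proof. by move=> x x' H; rewrite (prun_agree H). Qed.

End Proc.

Section Trees.
Variable R : realType.
Variable n : nat.
Local Notation cube := (cube n).
Local Notation tst := (dtree n * {set 'I_n})%type.

Definition tstep (x : cube) (s : tst) : tst :=
  match s.1 with
  | DLeaf _ => s
  | DNode i t0 t1 => (if x i then t1 else t0, i |: s.2)
  end.

Fixpoint depth (t : dtree n) : nat :=
  match t with
  | DLeaf _ => 0%N
  | DNode _ t0 t1 => (maxn (depth t0) (depth t1)).+1
  end.

Definition tnext (s : tst) : option 'I_n :=
  match s.1 with DNode i _ _ => Some i | _ => None end.
Definition tdnext (s : tst) : {set 'I_n} :=
  match s.1 with DNode i _ _ => i |: s.2 | _ => s.2 end.
Definition tcost (c : 'I_n -> R) (s : tst) : R :=
  match s.1 with DNode i _ _ => c i | _ => 0 end.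

Lemma tstep_dom x (s : tst) : (tstep x s).2 = tdnext s.
Proof. by case: s => [[b|i t0 t1] D]. Qed.

Lemma tA1 x (s : tst) : s.2 \subset (tstep x s).2.
Proof. by case: s => [[b|i t0 t1] D] /=; [exact: subxx | exact: finset.subsetUr]. Qed.

Lemma tdnext_sub (s : tst) : s.2 \subset tdnext s.
Proof. by case: s => [[b|i t0 t1] D] /=; [exact: subxx | exact: finset.subsetUr]. Qed.

Lemma tA2 x x' (s : tst) : agree (tstep x s).2 x x' -> tstep x' s = tstep x s.
Proof. by case: s => [[b|i t0 t1] D] H; rewrite /tstep /= in H *; rewrite /= ?(H i) ?setU11. Qed.

Lemma iter_leaf x k b D : iter k (tstep x) (@DLeaf n b, D) = (@DLeaf n b, D).
Proof. by elim: k => // k IH; rewrite iterS IH. Qed.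

Lemma trun_leaf t D x s : (depth t <= s)%N ->
  (iter s (tstep x) (t, D)).1 = @DLeaf n (dt_eval t x).
Proof.
elim: t s D => [b|i t0 IH0 t1 IH1] s D /= Hs; first by rewrite iter_leaf.
case: s Hs => // s Hs; rewrite iterSr /tstep /=.
rewrite ltnS geq_max in Hs; case/andP: Hs => H0 H1.
by case: (x i); [apply: IH1 | apply: IH0].
Qed.

Lemma trun_cost c t D x s : (depth t <= s)%N ->
  \sum_(k < s) tcost c (iter k (tstep x) (t, D)) = dt_cost c t x.
Proof.
elim: t s D => [b|i t0 IH0 t1 IH1] s D /= Hs.
  by apply: big1 => k _; rewrite iter_leaf.
case: s Hs => // s Hs; rewrite big_ord_recl /=.
rewrite ltnS geq_max in Hs; case/andP: Hs => H0 H1.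
congr (_ + _).
under eq_bigr => k _ do rewrite add0n -iterS iterSr.
rewrite /tstep /=.
by case: (x i); [apply: IH1 | apply: IH0].
Qed.

Definition Ind (b : bool) : R := b%:R.

Lemma Ind_ge0 b : 0 <= Ind b.
Proof. by case: b; rewrite /Ind /= ?ler01 ?lexx. Qed.

Lemma Ind_tri (p q r : bool) : Ind (p != r) <= Ind (p != q) + Ind (q != r).
Proof. by case: p; case: q; case: r; rewrite /Ind /=; lra. Qed.

Variable F : cube -> bool.

Definition infw (o : option 'I_n) : R := if o is Some j then Inf F j else 0.

Lemma Inf_sum j : Inf F j = (\sum_x Ind (F x != F (flip x j))) / NN R n.
Proof. by []. Qed.

Lemma bias_le b : bias F <= (\sum_u Ind (F u != b)) / NN R n.
Proof.
rewrite /bias /prob /avg -/(NN R n); case: b.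
  by rewrite ge_min; apply/orP; right.
by rewrite ge_min; apply/orP; left.
Qed.

Lemma mix0 (y x : cube) : mix finset.set0 y x = x.
Proof. by apply/ffunP => j; rewrite mixE finset.in_set0. Qed.

Lemma mix_setU1 (j : 'I_n) D (y w : cube) :
  mix (j |: D) y w = if (j \in D) || (y j == w j) then mix D y w else flip (mix D y w) j.
Proof.
apply/ffunP => k.
case C: ((j \in D) || (y j == w j));
case: (eqVneq k j) => [->|nkj]; rewrite /flip ?ffunE ?mixE ?in_setU1 ?eqxx ?(negbTE nkj) /=; move: C;
case: (j \in D); case: (y j); case: (w j) => //=.
Qed.

Lemma step_bound (st : tst) :
  \sum_w \sum_y Ind (F (mix st.2 y w) != F (mix (tdnext st) y w))
  <= NN R n * (NN R n * infw (tnext st)).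
Proof.
case: st => [[b|j t0 t1] D] /=.
  by rewrite mulr0 mulr0; rewrite big1 // => w _; rewrite big1 // => y _; rewrite eqxx.
pose G (v : cube) := Ind (F v != F (flip v j)).
apply: (@le_trans _ _ (\sum_w \sum_y G (mix D y w))).
  apply: ler_sum => w _; apply: ler_sum => y _.
  rewrite mix_setU1; case: ifP => _; first by rewrite eqxx; apply: Ind_ge0.
  exact: lexx.
rewrite exchange_big /= mix_unif Inf_sum -/G.
by rewrite (mulrC (NN R n) (_ / _)) divfK ?gt_eqF ?NN_gt0.
Qed.

Lemma tele (a : nat -> cube) s :
  Ind (F (a 0%N) != F (a s)) <= \sum_(t < s) Ind (F (a t) != F (a t.+1)).
Proof.
elim: s => [|s IH]; first by rewrite big_ord0 eqxx /Ind.
rewrite big_ord_recr /=.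
apply: le_trans (Ind_tri _ (F (a s)) _) _.
by rewrite lerD2r.
Qed.

Variable T : dtree n.
Hypothesis HT : forall x, dt_eval T x = F x.

Let run t x := prun tstep (T, finset.set0) t x.
Let D t x := (run t x).2.

Lemma run_agree t x x' : agree (D t x) x x' -> run t x' = run t x.
Proof. exact: (prun_agree (dom := snd) tA1 tA2). Qed.

Lemma D_stopping t : stopping (D t).
Proof. by move=> x x' H; rewrite /D (run_agree H). Qed.

Lemma D_succ t x : D t.+1 x = tdnext (run t x).
Proof. by rewrite /D /run /prun iterS tstep_dom. Qed.

Lemma F_agree x z : agree (D (depth T) x) x z -> F z = F x.
Proof.
move=> H; have E := run_agree H.
have L1 := trun_leaf finset.set0 z (leqnn (depth T)).
have L2 := trun_leaf finset.set0 x (leqnn (depth T)).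
rewrite -!HT; move: E; rewrite /run /prun => E.
by rewrite E L2 in L1; case: L1.
Qed.

Lemma osss :
  bias F <= avg (fun x => \sum_(t < depth T)
                   infw (tnext (run t x))).
Proof.
set s := depth T.
have NN0 := NN_gt0 R n.
have Hi : \sum_x \sum_y Ind (F x != F (mix (D s x) y x)) <=
   \sum_(t < s) \sum_x \sum_y Ind (F (mix (D t x) y x) != F (mix (D t.+1 x) y x)).
  rewrite [X in _ <= X]exchange_big /=; apply: ler_sum => x _.
  rewrite [X in _ <= X]exchange_big /=; apply: ler_sum => y _.
  have := tele (fun t => mix (D t x) y x) s.
  by rewrite /= {1}/D /run /prun /= mix0.
have Hii : forall t : nat,
   \sum_x \sum_y Ind (F (mix (D t x) y x) != F (mix (D t.+1 x) y x)) <=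
   NN R n * \sum_x infw (tnext (run t x)).
  move=> t.
  pose K x z := \sum_y Ind (F (mix (D t x) y z) != F (mix (D t.+1 x) y z)).
  have HK : forall x x' z, agree (D t x) x x' -> K x' z = K x z.
    move=> x x' z H; rewrite /K !D_succ /D (run_agree H) //.
  have L := L_lemma (@D_stopping t) HK.
  rewrite -(ler_pM2l NN0) -L /K.
  rewrite !mulr_sumr; apply: ler_sum => x _.
  have sub : D t x \subset D t.+1 x by rewrite D_succ; apply: tdnext_sub.
  have E1 : forall y w, mix (D t.+1 x) y (mix (D t x) x w) = mix (D t.+1 x) y w.
    by move=> y w; apply: mix_sub.
  under eq_bigr => w _ do under eq_bigr => y _ do rewrite mix_mix_r E1.
  rewrite D_succ; exact: step_bound.
have Hiii : NN R n * (NN R n * bias F) <=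
    \sum_x \sum_y Ind (F x != F (mix (D s x) y x)).
  pose K x z := \sum_y Ind (F z != F (mix (D s x) y z)).
  have HK : forall x x' z, agree (D s x) x x' -> K x' z = K x z.
    by move=> x x' z H; rewrite /K (D_stopping H).
  have L := L_lemma (@D_stopping s) HK.
  rewrite -(ler_pM2l NN0) -L /K.
  have -> : NN R n * (NN R n * (NN R n * bias F)) =
     \sum_(x : cube) (NN R n * (NN R n * bias F)).
    by rewrite sumr_const /NN mulr_natl.
  apply: ler_sum => x _.
  have E1 : forall w : cube, F (mix (D s x) x w) = F x.
    by move=> w; apply: F_agree; apply: agree_mix.
  under eq_bigr => w _ do under eq_bigr => y _ do
    rewrite mix_mix_r (E1 w).
  rewrite exchange_big /= (@mix_unif R n (D s x) (fun v => Ind (F x != F v))) ler_pM2l //.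
  have := bias_le (F x); rewrite ler_pdivlMr // mulrC.
  by under eq_bigr => u _ do rewrite eq_sym.
have H4 : NN R n * (NN R n * bias F) <=
   NN R n * \sum_x \sum_(t < s)
     infw (tnext (run t x)).
  apply: (le_trans Hiii); apply: (le_trans Hi).
  rewrite [X in _ <= _ * X]exchange_big /= mulr_sumr.
  by apply: ler_sum => t _; apply: Hii.
rewrite ler_pM2l // in H4.
by rewrite /avg -/(NN R n) ler_pdivlMr // mulrC.
Qed.

End Trees.

Section Gen.
Variable R : realType.
Variable n : nat.
Local Notation cube := (cube n).

Lemma avg_le (h : cube -> R) M : (forall x, h x <= M) -> avg h <= M.
Proof.
move=> H; rewrite /avg -/(NN R n) ler_pdivrMr ?NN_gt0 //.
apply: (@le_trans _ _ (\sum_(x : cube) M)); first by apply: ler_sum.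
by rewrite sumr_const /NN mulr_natr.
Qed.

Lemma avg_ge0 (h : cube -> R) : (forall x, 0 <= h x) -> 0 <= avg h.
Proof.
by move=> H; rewrite /avg divr_ge0 ?ler0n // sumr_ge0.
Qed.

Lemma avg_mulr (h : cube -> R) a : avg h * a = avg (fun x => h x * a).
Proof. by rewrite /avg mulrAC mulr_suml. Qed.

Lemma avg_ler (h1 h2 : cube -> R) : (forall x, h1 x <= h2 x) -> avg h1 <= avg h2.
Proof.
move=> H; rewrite /avg ler_pM2r ?invr_gt0 ?(NN_gt0 R n) //.
by apply: ler_sum.
Qed.

Lemma avgD (h1 h2 : cube -> R) : avg (fun x => h1 x + h2 x) = avg h1 + avg h2.
Proof. by rewrite /avg big_split mulrDl. Qed.

Lemma avg_sum (I : finType) (h : I -> cube -> R) :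
  avg (fun x => \sum_i h i x) = \sum_i avg (h i).
Proof. by rewrite /avg exchange_big mulr_suml. Qed.

Lemma avg_cst (a : R) : avg (fun _ : cube => a) = a.
Proof.
rewrite /avg sumr_const -/(NN R n) -mulr_natr -/(NN R n) -mulrA divff ?mulr1 //.
by rewrite gt_eqF // NN_gt0.
Qed.

Lemma Inf_ge0 (g : cube -> bool) j : 0 <= Inf g j :> R.
Proof. by apply: avg_ge0 => x; rewrite ler0n. Qed.

Lemma Inf_le1 (g : cube -> bool) j : Inf g j <= 1 :> R.
Proof. by apply: avg_le => x; case: (_ != _); rewrite ?ler01 ?lexx. Qed.

Lemma restr_flip (pi : restriction n) j b x :
  pi j = Some b -> restr_apply pi (flip x j) = restr_apply pi x.
Proof.
move=> hj; apply/ffunP => k; rewrite !ffunE.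
case: (eqVneq k j) => [->|nkj]; first by rewrite hj.
by case: (pi k) => //; rewrite ffunE (negbTE nkj).
Qed.

Lemma Inf_fixed (f : cube -> bool) (pi : restriction n) j b :
  pi j = Some b -> Inf (frestr f pi) j = 0 :> R.
Proof.
move=> hj; rewrite /Inf /prob /avg big1 ?mul0r // => x _.
by rewrite /frestr (restr_flip x hj) eqxx.
Qed.

Fixpoint trestr (pi : restriction n) (t : dtree n) : dtree n :=
  match t with
  | DLeaf b => DLeaf n b
  | DNode i t0 t1 =>
      match pi i with
      | Some b => if b then trestr pi t1 else trestr pi t0
      | None => DNode i (trestr pi t0) (trestr pi t1)
      end
  end.

Lemma trestr_eval pi t x : dt_eval (trestr pi t) x = dt_eval t (restr_apply pi x).
Proof.
elim: t => [b|i t0 IH0 t1 IH1] //=.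
case E: (pi i) => [b|] /=; rewrite ffunE E; first case: b E => _;
by rewrite ?IH0 ?IH1.
Qed.

Lemma trestr_cost (c : 'I_n -> R) pi t x : (forall i, 0 <= c i) ->
  dt_cost c (trestr pi t) x <= dt_cost c t (restr_apply pi x).
Proof.
move=> hc; elim: t => [b|i t0 IH0 t1 IH1] //=.
case E: (pi i) => [b|] /=; rewrite ffunE E.
  case: b E => _; [apply: le_trans IH1 _ | apply: le_trans IH0 _]; by rewrite lerDr.
by case: (x i); rewrite lerD2l.
Qed.

Definition setb (x : cube) i b : cube := [ffun j => if j == i then b else x j].

Fixpoint ftree (l : seq 'I_n) (g : cube -> bool) : dtree n :=
  match l with
  | [::] => DLeaf n (g [ffun=> false])
  | i :: l' => DNode i (ftree l' (fun x => g (setb x i false)))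
                       (ftree l' (fun x => g (setb x i true)))
  end.

Lemma ftree_eval (l : seq 'I_n) (g : cube -> bool) :
  (forall x y : cube, (forall j, j \in l -> x j = y j) -> g x = g y) ->
  forall x, dt_eval (ftree l g) x = g x.
Proof.
elim: l g => [|i l IH] g Hg x /=; first by apply: Hg.
have Hb : forall b, forall x y : cube, (forall j, j \in l -> x j = y j) ->
    g (setb x i b) = g (setb y i b).
  move=> b x1 y1 H; apply: Hg => j; rewrite in_cons !ffunE.
  by case: (j == i) => //=; apply: H.
case Exi: (x i).
  have Hs : setb x i true = x.
    by apply/ffunP => j; rewrite ffunE; case: (eqVneq j i) => [->|] //; rewrite Exi.
  rewrite (IH (fun y => g (setb y i true))); last exact: (Hb true).
  by rewrite Hs.
have Hs : setb x i false = x.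
  by apply/ffunP => j; rewrite ffunE; case: (eqVneq j i) => [->|] //; rewrite Exi.
rewrite (IH (fun y => g (setb y i false))); last exact: (Hb false).
by rewrite Hs.
Qed.

Lemma ftree_zero (f : cube -> bool) : dt_zero_error f (ftree (enum 'I_n) f).
Proof.
move=> x; apply: ftree_eval => x1 y1 H; congr f; apply/ffunP => j.
by apply: H; rewrite mem_enum.
Qed.

End Gen.

Section Iprr.
Variable R : realType.
Variable n : nat.
Local Notation cube := (cube n).
Variable f : cube -> bool.
Variable c : 'I_n -> R.
Variables eps beta : R.
Variable sel : state R n -> option 'I_n.
Hypothesis hc : forall i, 0 <= c i.
Hypothesis heps : 0 < eps.
Hypothesis hbeta : 0 < beta.

Local Notation step := (iprr_step f c eps beta sel).

Definition idom (s : state R n) : {set 'I_n} := [set j | s.2 j != None].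

Lemma iA1 x s : idom s \subset idom (step x s).
Proof.
rewrite /iprr_step; case: (eps < _) => //; case: (sel s) => [i|] //.
rewrite /invest /=; case: ifP => _ //.
apply/fintype.subsetP => j; rewrite !inE /=; by case: (j == i).
Qed.

Lemma iA2 x x' s : agree (idom (step x s)) x x' -> step x' s = step x s.
Proof.
rewrite /iprr_step; case hb: (eps < _) => //; case E: (sel s) => [i|] // H.
rewrite /invest /=; case hci: (c i <= _) => //.
suff -> : x' i = x i by [].
apply: H; by rewrite /idom inE /invest /= hci eqxx.
Qed.

Definition Inv (x : cube) (s : state R n) : Prop :=
  [/\ forall j b, s.2 j = Some b -> x j = b,
      forall j, 0 <= s.1 j,
      forall j, s.2 j = None -> s.1 j < c j \/ s.1 j = 0
    & forall j, exists m : nat, s.1 j = m%:R * beta].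

Lemma Inv_init x : Inv x (init_state R n).
Proof.
split => //= j; first by right.
by exists 0%N; rewrite mul0r.
Qed.

Lemma Inv_step x s : Inv x s -> Inv x (step x s).
Proof.
case=> I1 I2 I3 I4; rewrite /iprr_step; case: (eps < _) => //.
case: (sel s) => [i|] //; rewrite /invest /=.
have I2' : forall j, 0 <= (if j == i then s.1 j + beta else s.1 j).
  by move=> j; case: (j == i); rewrite ?addr_ge0 // ltW.
have I4' : forall j, exists m : nat, (if j == i then s.1 j + beta else s.1 j) = m%:R * beta.
  move=> j; case: (I4 j) => m hm; case: (j == i); last by exists m.
  by exists m.+1; rewrite hm -addn1 natrD mulrDl mul1r.
case hci: (c i <= _); split => //= j.
- case: (eqVneq j i) => [->|_] //; first by move=> b [->].
  exact: I1.
- case: (eqVneq j i) => [->|_] //; exact: I3.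
- case: (eqVneq j i) => [->|_]; last exact: I3.
  by move=> _; left; move: hci; rewrite eqxx ltNge => ->.
Qed.

Lemma Inv_run t x : Inv x (iprr_run f c eps beta sel x t).
Proof.
elim: t => [|t IH]; first exact: Inv_init.
by rewrite /iprr_run iterS; apply: Inv_step.
Qed.

Lemma ratio_cmp (s : state R n) i j : (forall k, 0 <= s.1 k) ->
  (iprr_ratio f s j <= iprr_ratio f s i)%E ->
  Inf (frestr f s.2) j * s.1 i <= Inf (frestr f s.2) i * s.1 j.
Proof.
move=> hpos; rewrite /iprr_ratio /=.
set Ij := Inf _ j; set Ii := Inf _ i.
have Ij0 : 0 <= Ij by apply: Inf_ge0.
have Ii0 : 0 <= Ii by apply: Inf_ge0.
case: (eqVneq (s.1 i) 0) => hi.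
  by rewrite hi mulr0 mulr_ge0.
have hip : 0 < s.1 i by rewrite lt_neqAle eq_sym hi hpos.
case: (eqVneq (s.1 j) 0) => hj.
  case: (eqVneq Ij 0) => hIj; first by rewrite hIj mul0r hj mulr0.
  by rewrite leye_eq.
have hjp : 0 < s.1 j by rewrite lt_neqAle eq_sym hj hpos.
rewrite lee_fin ler_pdivrMr // mulrAC ler_pdivlMr //.
Qed.

Lemma ratio_zero (s : state R n) i j : (forall k, 0 <= s.1 k) ->
  Inf (frestr f s.2) i = 0 :> R ->
  (iprr_ratio f s j <= iprr_ratio f s i)%E -> Inf (frestr f s.2) j = 0 :> R.
Proof.
move=> hpos hI.
have -> : iprr_ratio f s i = 0%E.
  by rewrite /iprr_ratio /= hI eqxx; case: (_ == 0) => //; rewrite mul0r.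
rewrite /iprr_ratio /=.
set Ij := Inf _ j.
have Ij0 : 0 <= Ij by apply: Inf_ge0.
case: (eqVneq (s.1 j) 0) => hj.
  by case: (eqVneq Ij 0) => // _; rewrite leye_eq.
have hjp : 0 < s.1 j by rewrite lt_neqAle eq_sym hj hpos.
rewrite lee_fin ler_pdivrMr // mul0r => H.
by apply/eqP; rewrite eq_le H Ij0.
Qed.

Lemma worst_ge (T : dtree n) x : dt_cost c T x <= dt_worst_cost c T.
Proof. exact: (le_bigmax 0 (fun x => dt_cost c T x) x). Qed.

Lemma cost_ge0 (T : dtree n) x : 0 <= dt_cost c T x.
Proof.
elim: T => [b|i t0 IH0 t1 IH1] //=.
by case: (x i); rewrite addr_ge0.
Qed.

Lemma worst_ge0 (T : dtree n) : 0 <= dt_worst_cost c T.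
Proof. apply: le_trans (worst_ge T [ffun=> false]); exact: cost_ge0. Qed.

Definition Wset : set R := fun w => exists t : dtree n, dt_zero_error f t /\ w = dt_worst_cost c t.

Lemma Wset_n0 : (Wset !=set0)%classic.
Proof. by exists (dt_worst_cost c (ftree (enum 'I_n) f)); exists (ftree (enum 'I_n) f); split => //; apply: ftree_zero. Qed.

Lemma opt_ge0 : 0 <= opt0w f c.
Proof.
apply: lb_le_inf; first exact: Wset_n0.
by move=> w [t [_ ->]]; apply: worst_ge0.
Qed.

Lemma sel_key (s : state R n) i :
  (forall j, 0 <= s.1 j) -> (forall j, s.2 j = None -> s.1 j <= c j) ->
  eps < bias (frestr f s.2) ->
  (forall j, (iprr_ratio f s j <= iprr_ratio f s i)%E) ->
  (0 : R) < Inf (frestr f s.2) i /\ eps * s.1 i <= opt0w f c * Inf (frestr f s.2) i.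
Proof.
move=> hpos hcj hb hmax.
set g := frestr f s.2.
set Ii := Inf g i.
have Ii0 : 0 <= Ii by apply: Inf_ge0.
have Htr : forall T, dt_zero_error f T -> forall x, dt_eval (trestr s.2 T) x = g x.
  by move=> T zT x; rewrite trestr_eval zT.
have Hcmp : forall j, Inf g j * s.1 i <= Ii * c j.
  move=> j; have := ratio_cmp hpos (hmax j); rewrite -/g -/Ii => H.
  case E: (s.2 j) => [b|].
    by rewrite /g (@Inf_fixed R n f _ _ _ E) mul0r mulr_ge0.
  apply: le_trans H _; by rewrite ler_wpM2l // hcj.
have Hmain : forall T, dt_zero_error f T -> eps * s.1 i <= dt_worst_cost c T * Ii.
  move=> T zT.
  have Ho := osss R (Htr T zT).
  apply: (@le_trans _ _ (bias g * s.1 i)); first by rewrite ler_wpM2r // ltW.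
  apply: le_trans (ler_wpM2r (hpos i) Ho) _.
  rewrite avg_mulr mulrC; apply: avg_le => x.
  rewrite mulr_suml.
  apply: (@le_trans _ _ (Ii * dt_cost c (trestr s.2 T) x)).
    rewrite -(trun_cost c finset.set0 x (leqnn _)) mulr_sumr.
    apply: ler_sum => t _.
    set st := prun _ _ _ _.
    rewrite /tcost /tnext /=; case: st.1 => [b|j t0 t1] /=; first by rewrite mul0r mulr0.
    exact: Hcmp.
  rewrite ler_wpM2l //; apply: le_trans (trestr_cost _ _ _ hc) _.
  exact: worst_ge.
have Hpos : 0 < Ii.
  rewrite lt_neqAle Ii0 andbT; apply/negP => /eqP Hz.
  have zT := ftree_zero f.
  have Ho := osss R (Htr _ zT).
  have : avg (fun x => \sum_(t < depth (trestr s.2 (ftree (enum 'I_n) f)))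
        infw R g (tnext (prun (@tstep n) (trestr s.2 (ftree (enum 'I_n) f), finset.set0) t x))) = 0.
    transitivity (avg (fun _ : cube => (0 : R))); last exact: avg_cst. congr avg; apply: funext => x; apply: big1 => t _.
    case: (tnext _) => [j|] //=.
    exact: (ratio_zero hpos (esym Hz) (hmax j)).
  move=> E; rewrite E in Ho.
  by move: (lt_le_trans hb Ho); rewrite ltNge (ltW heps).
split => //.
rewrite -ler_pdivrMr //.
apply: lb_le_inf; first exact: Wset_n0.
move=> w [t [zt ->]]; rewrite ler_pdivrMr //; exact: Hmain.
Qed.

End Iprr.

Lemma exists_nat_gt (R : realType) (x : R) : exists K : nat, x < K%:R.
Proof. by exists (Num.Def.trunc x).+1; apply: truncnS_gt. Qed.

Section Iprr2.
Variable R : realType.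
Variable n : nat.
Local Notation cube := (cube n).
Variable f : cube -> bool.
Variable c : 'I_n -> R.
Variables eps beta : R.
Variable sel : state R n -> option 'I_n.
Hypothesis hc : forall i, 0 <= c i.
Hypothesis heps : 0 < eps.
Hypothesis hbeta : 0 < beta.
Hypothesis hsel : iprr_selector f eps sel.

Local Notation step := (iprr_step f c eps beta sel).
Local Notation run t x := (iprr_run f c eps beta sel x t).

Lemma Inv_le_c x s : Inv c beta x s -> forall j, s.2 j = None -> s.1 j <= c j.
Proof. by case=> _ _ I3 _ j /I3 [/ltW|->]. Qed.

Lemma Inv_pos x s : Inv c beta x s -> forall j, 0 <= s.1 j.
Proof. by case. Qed.

Lemma step_active x s : Inv c beta x s -> eps < bias (frestr f s.2) ->
  exists i, [/\ step x s = invest c beta x s i,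
     (0 : R) < Inf (frestr f s.2) i,
     eps * s.1 i <= opt0w f c * Inf (frestr f s.2) i &
     s.2 i = None].
Proof.
move=> hI hb; case: (hsel hb) => i hi hmax.
have [H1 H2] := sel_key hc heps (Inv_pos hI) (Inv_le_c hI) hb hmax.
exists i; split => //.
  by rewrite /iprr_step hb hi.
case E: (s.2 i) => [b|] //.
by move: H1; rewrite (@Inf_fixed R n f _ _ _ E) ltxx.
Qed.

Lemma step_halted x s : ~~ (eps < bias (frestr f s.2)) -> step x s = s.
Proof. by rewrite /iprr_step => /negbTE ->. Qed.

Lemma theta_le x t j : (run t x).1 j <= c j + beta.
Proof.
elim: t j => [|t IH] j.
  by rewrite /= addr_ge0 // ?hc // ltW.
rewrite /iprr_run iterS -/(iprr_run f c eps beta sel x t).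
have hI := Inv_run f c eps sel hbeta t x.
case hb: (eps < bias (frestr f (run t x).2)); last by rewrite step_halted ?hb.
have [i [-> _ _ Hn]] := step_active hI hb.
rewrite /invest /=; case: (eqVneq j i) => [->|_]; last exact: IH.
by rewrite lerD2r; apply: (Inv_le_c hI).
Qed.

Lemma l1cost_eq (s : state R n) : (forall j, 0 <= s.1 j) -> l1cost s = \sum_j s.1 j.
Proof. by move=> H; apply: eq_bigr => j _; rewrite ger0_norm. Qed.

Lemma halt_or_cost x t : iprr_halted f eps (run t x) \/ l1cost (run t x) = t%:R * beta.
Proof.
elim: t => [|t IH].
  right; rewrite mul0r /l1cost big1 // => j _; by rewrite normr0.
have hI := Inv_run f c eps sel hbeta t x.
rewrite /iprr_run iterS -/(iprr_run f c eps beta sel x t).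
case hb: (eps < bias (frestr f (run t x).2)); last first.
  by left; rewrite step_halted ?hb //; rewrite /iprr_halted leNgt hb.
case: IH => [hh|IH]; first by move: hh; rewrite /iprr_halted leNgt hb.
have [i [-> _ _ _]] := step_active hI hb.
right.
have hI' := Inv_step f eps sel hbeta hI.
rewrite /iprr_step hb in hI'.
rewrite (l1cost_eq (Inv_pos hI)) in IH.
have [_ _ _ _] := hI'.
rewrite l1cost_eq; last first.
  move=> j; rewrite /invest /=; case: (j == i); rewrite ?addr_ge0 ?(Inv_pos hI) ?ltW //.
rewrite /invest /= (bigD1 i) //= eqxx.
rewrite (bigD1 i) //= in IH.
have -> : \sum_(j | j != i) (if j == i then (run t x).1 j + beta else (run t x).1 j) =
          \sum_(j | j != i) (run t x).1 j.
  by apply: eq_bigr => j /negbTE ->.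
by rewrite -addrA (addrC beta) addrA IH -addn1 natrD mulrDl mul1r.
Qed.

Lemma halting : exists K : nat, forall x, iprr_halted f eps (run K x).
Proof.
have [K HK] := exists_nat_gt ((\sum_j (c j + beta)) / beta).
exists K => x.
case: (halt_or_cost x K) => // H.
have : l1cost (run K x) <= \sum_j (c j + beta).
  rewrite (l1cost_eq (Inv_pos (Inv_run f c eps sel hbeta K x))).
  by apply: ler_sum => j _; apply: theta_le.
rewrite H => H2.
move: HK; rewrite ltr_pdivrMr // => H3.
by move: (le_lt_trans H2 H3); rewrite ltxx.
Qed.

Lemma halted_stable x t u : (t <= u)%N -> iprr_halted f eps (run t x) -> run u x = run t x.
Proof.
move=> /subnK <-; elim: (u - t)%N => [|k IH] H; first by rewrite add0n.
rewrite addSn /iprr_run iterS -/(iprr_run f c eps beta sel x (k + t)) IH //.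
by rewrite step_halted // -leNgt.
Qed.

End Iprr2.

Section Err.
Variable R : realType.
Variable n : nat.
Local Notation cube := (cube n).

Lemma out_bias (g : cube -> bool) :
  \sum_y Ind R (((2^-1 : R) <= expect_bool g) != g y) = NN R n * bias g.
Proof.
have NN0 := NN_gt0 R n.
set S1 := \sum_y Ind R (g y != false).
set S0 := \sum_y Ind R (g y != true).
have HS : S1 + S0 = NN R n.
  rewrite /S1 /S0 -big_split /=.
  rewrite (eq_bigr (fun _ => 1)); first by rewrite sumr_const /NN.
  by move=> y _; case: (g y); rewrite /Ind /= ?addr0 ?add0r.
have Hb : bias g = Num.min (S1 / NN R n) (S0 / NN R n) by [].
have He : expect_bool g = S1 / NN R n.
  rewrite /expect_bool /avg /S1; congr (_ / _); apply: eq_bigr => y _.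
  by case: (g y).
have HS0 : S0 / NN R n = 1 - S1 / NN R n.
  have -> : S0 = NN R n - S1 by rewrite -HS addrC addKr.
  by rewrite mulrBl divff ?gt_eqF.
rewrite He Hb HS0.
case: (lerP (2^-1) (S1 / NN R n)) => H.
  rewrite min_r; last by lra.
  rewrite -HS0 mulrC divfK ?gt_eqF // /S0.
  by apply: eq_bigr => y _; rewrite eq_sym.
rewrite min_l; last by lra.
rewrite mulrC divfK ?gt_eqF // /S1.
by apply: eq_bigr => y _; rewrite eq_sym.
Qed.

Variable f : cube -> bool.
Variable c : 'I_n -> R.
Variables eps beta : R.
Variable sel : state R n -> option 'I_n.
Hypothesis hbeta : 0 < beta.

Lemma restr_mix x (s : state R n) y : Inv c beta x s ->
  restr_apply s.2 y = mix (idom s) x y.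
Proof.
case=> I1 _ _ _; apply/ffunP => j; rewrite ffunE mixE inE.
by case E: (s.2 j) => [b|] //=; rewrite (I1 _ _ E).
Qed.

Lemma err_bound K : (forall x, iprr_halted f eps (iprr_run f c eps beta sel x K)) ->
  prob (fun x => iprr_output f (iprr_run f c eps beta sel x K) != f x) <= eps.
Proof.
move=> Hh.
have NN0 := NN_gt0 R n.
pose stp := iprr_step f c eps beta sel.
pose run t x := prun stp (init_state R n) t x.
have A1 := iA1 f c eps beta sel.
have A2 : forall x x' s, agree (idom (stp x s)) x x' -> stp x' s = stp x s.
  by move=> x x' s; apply: iA2.
have stD : stopping (fun x => idom (run K x)) := @prun_stopping _ _ _ _ (init_state R n) A1 A2 K.
pose K' x z := Ind R (iprr_output f (run K x) != f z).
have HK : forall x x' z, agree (idom (run K x)) x x' -> K' x' z = K' x z.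
  by move=> x x' z H; rewrite /K' /run /stp (prun_agree A1 A2 H).
have L := L_lemma stD HK.
rewrite /prob /avg -/(NN R n) ler_pdivrMr //.
rewrite -(ler_pM2l NN0).
have -> : \sum_x ((iprr_output f (iprr_run f c eps beta sel x K) != f x)%:R : R)
   = \sum_x K' x x by [].
rewrite -L.
have -> : NN R n * (eps * NN R n) = \sum_(x : cube) (NN R n * eps).
  by rewrite (mulrC eps) sumr_const /NN mulr_natl.
apply: ler_sum => x _.
have hI : Inv c beta x (run K x) := Inv_run f c eps sel hbeta K x.
rewrite /K'.
under eq_bigr => y _ do rewrite -(restr_mix y hI).
rewrite /iprr_output out_bias ler_pM2l //.
exact: Hh.
Qed.

End Err.

Section Riemann.
Variable R : realType.

Lemma LNineq (u v : R) : 0 < u -> 0 < v -> v - u <= (ln v - ln u) * v.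
Proof.
move=> hu hv.
have h0 : 0 < u / v by rewrite divr_gt0.
have h1 : -1 < u / v - 1 by lra.
have := le_ln1Dx h1; rewrite addrC subrK.
rewrite ln_div ?posrE // => H.
have : (ln u - ln v) * v <= (u / v - 1) * v by rewrite ler_pM2r.
have E : (u / v - 1) * v = u - v by rewrite mulrBl divfK ?gt_eqF // mul1r.
rewrite E => H2.
lra.
Qed.

Variable m : R.
Hypothesis hm : 0 < m.

Definition Phi (s : R) : R := if s <= m then s else m + m * (ln s - ln m).

Lemma conc (a b P : R) : 0 <= a -> a <= b -> 0 < b -> 0 <= P -> P <= 1 -> P * b <= m ->
  (b - a) * P <= Phi b - Phi a.
Proof.
move=> ha hab hb hP0 hP1 hPb.
rewrite /Phi.
case: (lerP b m) => hbm.
  have -> : a <= m by apply: le_trans hbm.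
  nra.
case: (lerP a m) => ham.
  have LN := LNineq hm hb.
  have e1 : 0 <= (b - m) * (m - P * b) by apply: mulr_ge0; lra.
  have e2 : 0 <= m * ((ln b - ln m) * b - (b - m)) by apply: mulr_ge0; lra.
  have H : b * ((b - m) * P) <= b * (m * (ln b - ln m)) by nra.
  rewrite ler_pM2l // in H.
  nra.
have hapos : 0 < a by apply: lt_trans ham.
have LN := LNineq hapos hb.
have e1 : 0 <= (b - a) * (m - P * b) by apply: mulr_ge0; lra.
have e2 : 0 <= m * ((ln b - ln a) * b - (b - a)) by apply: mulr_ge0; [exact: ltW | rewrite subr_ge0].  
have H : b * ((b - a) * P) <= b * (m * (ln b - ln a)) by nra.
rewrite ler_pM2l // in H.
lra.
Qed.

Lemma Phi0 : Phi 0 = 0.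
Proof. by rewrite /Phi ltW. Qed.

Lemma Phi1 : m <= 1 -> Phi 1 = m * (1 + ln m^-1).
Proof.
move=> hm1; rewrite /Phi.
case: (lerP 1 m) => h.
  have -> : m = 1 by apply/eqP; rewrite eq_le hm1 h.
  by rewrite invr1 ln1 addr0 mulr1.
rewrite ln1 lnV ?posrE //; lra.
Qed.

End Riemann.

Lemma riemann (R : realType) (m delta : R) (P : nat -> R) (L : nat) :
  0 < delta -> 0 <= m -> m <= 1 ->
  (forall k, 0 <= P k /\ P k <= 1) ->
  (forall k, (k.+1)%:R * delta * P k.+1 <= m) ->
  (forall k, 1 < k%:R * delta -> P k = 0) ->
  \sum_(k < L) delta * P k.+1 <= inf_term m.
Proof.
move=> hd hm0 hm1 hP hPm hP0.
case: (eqVneq m 0) => hm.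
  rewrite /inf_term hm eqxx big1 // => k _.
  have := hPm k; rewrite hm => H.
  have hk : 0 < (k.+1)%:R * delta by rewrite mulr_gt0 // ltr0n.
  have [H1 _] := hP k.+1.
  have : P k.+1 <= 0.
    by rewrite -(ler_pM2l hk) mulr0.
  by move=> H2; rewrite (_ : P k.+1 = 0) ?mulr0 //; apply/eqP; rewrite eq_le H2 H1.
have hmp : 0 < m by rewrite lt_neqAle eq_sym hm hm0.
pose Psi (s : R) := Phi m (Num.min s 1).
have term : forall k : nat, delta * P k.+1 <= Psi ((k.+1)%:R * delta) - Psi (k%:R * delta).
  move=> k; rewrite /Psi.
  have [H1 H2] := hP k.+1.
  have hk0 : 0 <= k%:R * delta by rewrite mulr_ge0 // ?ler0n ltW.
  have hk1 : k%:R * delta <= (k.+1)%:R * delta by rewrite ler_pM2r // ler_nat.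
  case: (lerP ((k.+1)%:R * delta) 1) => hb.
    rewrite (min_l (le_trans hk1 hb)).
    have E : (k.+1)%:R * delta - k%:R * delta = delta.
      by rewrite -mulrBl -natrB // subSnn mul1r.
    rewrite -{1}E.
    apply: conc => //.
      by rewrite mulr_gt0 // ltr0n.
    by rewrite mulrC.
  rewrite (hP0 _ hb) mulr0.
  have ha : 0 <= Num.min (k%:R * delta) 1 by rewrite le_min hk0 ler01.
  have ha1 : Num.min (k%:R * delta) 1 <= 1 by rewrite ge_min lexx orbT.
  have := @conc R m hmp (Num.min (k%:R * delta) 1) 1 0 ha ha1 ltr01 (lexx 0) ler01.
  rewrite !mul0r mulr0 => H; apply: H; exact: ltW.
have tel : \sum_(k < L) (Psi ((k.+1)%:R * delta) - Psi (k%:R * delta)) = Psi (L%:R * delta) - Psi 0.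
  rewrite -(big_mkord xpredT (fun k => Psi ((k.+1)%:R * delta) - Psi (k%:R * delta))).
  by rewrite (telescope_sumr (fun k => Psi (k%:R * delta)) (leq0n L)) mul0r.
apply: (@le_trans _ _ (\sum_(k < L) (Psi ((k.+1)%:R * delta) - Psi (k%:R * delta)))).
  by apply: ler_sum => k _; apply: term.
rewrite tel.
have -> : Psi 0 = 0 by rewrite /Psi (min_l ler01) Phi0.
rewrite subr0 /inf_term (negbTE hm) -Phi1 //.
have ha : 0 <= Num.min (L%:R * delta) 1 by rewrite le_min ler01 mulr_ge0 // ?ler0n ltW.
have ha1 : Num.min (L%:R * delta) 1 <= 1 by rewrite ge_min lexx orbT.
have := @conc R m hmp (Num.min (L%:R * delta) 1) 1 0 ha ha1 ltr01 (lexx 0) ler01.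
rewrite !mul0r mulr0 subr_ge0 => H; apply: H; exact: ltW.
Qed.

Lemma cnt (R : realType) (L N : nat) : (N <= L.+1)%N ->
  (N%:R : R) <= 1 + \sum_(k < L) (((k.+1 < N)%N)%:R : R).
Proof.
elim: L N => [|L IH] N hN.
  by rewrite big_ord0 addr0 -[1]/(1%:R) ler_nat.
rewrite big_ord_recr /=.
case: (leqP N L.+1) => h.
  apply: le_trans (IH _ h) _; rewrite addrA lerDl.
  by case: (_ < _)%N.
have -> : N = L.+2 by apply/eqP; rewrite eqn_leq hN h.
have H := IH L.+1 (leqnn _).
rewrite addrA.
have : \sum_(k < L) (((k.+1 < L.+1)%N)%:R : R) <= \sum_(k < L) (((k.+1 < L.+2)%N)%:R : R).
  apply: ler_sum => k _; have h1 : (k.+1 < L.+1)%N := ltn_ord k.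
  by have h2 : (k.+1 < L.+2)%N := ltnW h1; rewrite h1 h2.
move=> H2.
have -> : (L.+2%:R : R) = L.+1%:R + (true%:R : R) by rewrite -natrD addn1.
by rewrite lerD2r; apply: le_trans H _; rewrite lerD2l.
Qed.

Section Cost.
Variable R : realType.
Variable n : nat.
Local Notation cube := (cube n).
Variable f : cube -> bool.
Variable c : 'I_n -> R.
Variables eps beta : R.
Variable sel : state R n -> option 'I_n.
Hypothesis hc : forall i, 0 <= c i.
Hypothesis heps : 0 < eps.
Hypothesis hbeta : 0 < beta.
Hypothesis hsel : iprr_selector f eps sel.
Variable i : 'I_n.

Local Notation run t x := (iprr_run f c eps beta sel x t).
Local Notation opt := (opt0w f c).
Definition Mi (s : state R n) : R := Inf (frestr f s.2) i.

Lemma Mi_ge0 s : 0 <= Mi s. Proof. exact: Inf_ge0. Qed.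
Lemma Mi_le1 s : Mi s <= 1. Proof. exact: Inf_le1. Qed.

Lemma IF t x : (run t.+1 x).1 i = (run t x).1 i \/
  ((run t.+1 x).1 i = (run t x).1 i + beta /\ eps * (run t x).1 i <= opt * Mi (run t x)).
Proof.
have hI := Inv_run f c eps sel hbeta t x.
rewrite /iprr_run iterS -/(iprr_run f c eps beta sel x t).
case hb: (eps < bias (frestr f (run t x).2)); last by left; rewrite step_halted ?hb.
have [i0 [-> _ H _]] := step_active hc heps hsel hI hb.
rewrite /invest /=; case: (eqVneq i i0) => [E|_]; last by left.
by rewrite -E in H *; right; split.
Qed.

Lemma theta_ge0 t x : 0 <= (run t x).1 i.
Proof. by case: (Inv_run f c eps sel hbeta t x). Qed.

Lemma theta_opt0 : opt = 0 -> forall t x, (run t x).1 i <= beta.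
Proof.
move=> h0; elim => [|t IH] x; first by rewrite /= ltW.
case: (IF t x) => [->|[-> H]] //.
rewrite h0 mul0r in H.
have : (run t x).1 i <= 0 by rewrite -(ler_pM2l heps) mulr0.
by move=> H2; lra.
Qed.

Lemma theta_optb t x : (run t x).1 i <= beta + opt / eps.
Proof.
have ho := opt_ge0 f hc.
have hoe : 0 <= opt / eps by rewrite divr_ge0 // ltW.
elim: t => [|t IH]; first by rewrite /= addr_ge0 // ltW.
case: (IF t x) => [->|[-> H]] //.
have : eps * (run t x).1 i <= opt.
  apply: le_trans H _; rewrite -{2}(mulr1 opt); apply: ler_wpM2l => //; exact: Mi_le1.
rewrite mulrC -ler_pdivlMr // => H2; lra.
Qed.

Definition sstep (lam : R) x s := if lam <= Mi s then s else iprr_step f c eps beta sel x s.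

Lemma sA1 lam x s : idom s \subset idom (sstep lam x s).
Proof. by rewrite /sstep; case: ifP => _; [exact: subxx | exact: iA1]. Qed.

Lemma sA2 lam x x' s : agree (idom (sstep lam x s)) x x' -> sstep lam x' s = sstep lam x s.
Proof. by rewrite /sstep; case: ifP => // _; apply: iA2. Qed.

Definition srun lam t x := prun (sstep lam) (init_state R n) t x.

Lemma sInv lam t x : Inv c beta x (srun lam t x).
Proof.
elim: t => [|t IH]; first exact: Inv_init.
rewrite /srun /prun iterS -/(prun (sstep lam) (init_state R n) t x) -/(srun lam t x).
rewrite /sstep; case: ifP => _ //; exact: Inv_step.
Qed.

Lemma restr_flip_none (pi : restriction n) (y : cube) : pi i = None ->
  restr_apply pi (flip y i) = flip (restr_apply pi y) i.
Proof.
move=> hi; apply/ffunP => k; rewrite !ffunE.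
case: (eqVneq k i) => [->|nki]; first by rewrite hi.
by case: (pi k).
Qed.

Let G (z : cube) := Ind R (f z != f (flip z i)).

Lemma Mi_bound (s : state R n) x : Inv c beta x s ->
  Mi s <= avg (fun y => G (mix (idom s) x y)).
Proof.
move=> hI; apply: avg_ler => y.
case E: (s.2 i) => [b|].
  by rewrite /frestr (restr_flip y E) eqxx; apply: Ind_ge0.
by rewrite /frestr (restr_flip_none y E) (restr_mix y hI).
Qed.

Lemma exp_M lam K : avg (fun x => Mi (srun lam K x)) <= Inf f i.
Proof.
have NN0 := NN_gt0 R n.
apply: le_trans (avg_ler (fun x => Mi_bound (sInv lam K x))) _.
have stD : stopping (fun x => idom (srun lam K x)).
  exact: (@prun_stopping _ _ _ _ (init_state R n) (sA1 lam) (@sA2 lam) K).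
have L := @L_lemma R n (fun x => idom (srun lam K x)) (fun _ z => G z) stD (fun _ _ _ _ => erefl).
rewrite /avg -mulr_suml /= L -/(NN R n).
rewrite -mulrA (mulrC (NN R n)) mulrA mulfK ?gt_eqF //.
Qed.

Lemma ville lam K : 0 <= lam ->
  lam * avg (fun x => Ind R (lam <= Mi (srun lam K x))) <= Inf f i.
Proof.
move=> hl; apply: le_trans (exp_M lam K).
rewrite mulrC avg_mulr; apply: avg_ler => x.
rewrite /Ind; case: (lerP lam (Mi (srun lam K x))) => h /=; first by rewrite mul1r.
by rewrite mul0r; apply: Mi_ge0.
Qed.

Lemma compare (k : nat) (lam : R) : 0 < opt -> opt * lam = eps * (k%:R * beta) ->
  forall t x, lam <= Mi (srun lam t x) \/
    (srun lam t x = run t x /\ (run t x).1 i <= k%:R * beta).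
Proof.
move=> hop hlam; elim => [|t IH] x.
  by right; split => //=; rewrite mulr_ge0 // ?ler0n // ltW.
have E1 : srun lam t.+1 x = sstep lam x (srun lam t x).
  by rewrite /srun /prun iterS.
case: (IH x) => [H|[E Hth]].
  by left; rewrite E1 /sstep H.
case hl: (lam <= Mi (srun lam t x)).
  by left; rewrite E1 /sstep hl.
right.
have E2 : srun lam t.+1 x = run t.+1 x.
  by rewrite E1 /sstep hl E /iprr_run iterS.
split => //.
case: (IF t x) => [->|[-> H]] //.
have hlt : Mi (run t x) < lam by rewrite -E ltNge hl.
have ho := opt_ge0 f hc.
have H3 : eps * (run t x).1 i < eps * (k%:R * beta).
  apply: le_lt_trans H _; rewrite -hlam.
  by rewrite ltr_pM2l.
rewrite ltr_pM2l // in H3.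
case: (Inv_run f c eps sel hbeta t x) => _ _ _ I4.
case: (I4 i) => m hm.
rewrite hm ltr_pM2r // ltr_nat in H3.
by rewrite hm -{2}(mul1r beta) -mulrDl ler_pM2r // natr1 ler_nat.
Qed.

Lemma coord_bound K :
  avg (fun x => (run K x).1 i) <= beta + opt / eps * inf_term (Inf f i).
Proof.
have ho := opt_ge0 f hc.
case: (eqVneq opt 0) => h0.
  rewrite h0 mul0r mul0r addr0; apply: avg_le => x; exact: theta_opt0 h0 K x.
have hop : 0 < opt by rewrite lt_neqAle eq_sym h0 ho.
pose delta := eps * beta / opt.
have hd : 0 < delta by rewrite /delta divr_gt0 // mulr_gt0.
pose lam (j : nat) := j%:R * delta.
have hlam : forall j : nat, opt * lam j = eps * (j%:R * beta).
  move=> j; rewrite /lam /delta; field; by rewrite gt_eqF.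
have [L HL] := exists_nat_gt (opt / eps / beta).
pose P (j : nat) := avg (fun x => Ind R (lam j <= Mi (srun (lam j) K x))).
have Hpt : forall x, (run K x).1 i <=
    beta + beta * \sum_(k < L) Ind R (lam k.+1 <= Mi (srun (lam k.+1) K x)).
  move=> x.
  have [_ _ _ I4] := Inv_run f c eps sel hbeta K x.
  have [N hN] := I4 i.
  have hNL : (N <= L.+1)%N.
    have H1 := theta_optb K x.
    rewrite ltr_pdivrMr // in HL.
    have H2 : N%:R * beta < L.+1%:R * beta.
      by rewrite -hN -natr1 mulrDl mul1r; lra.
    by rewrite ltr_pM2r // ltr_nat in H2; apply: ltnW.
  have C := cnt R hNL.
  rewrite hN.
  apply: (@le_trans _ _ ((1 + \sum_(k < L) (((k.+1 < N)%N)%:R : R)) * beta)).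
    by rewrite ler_pM2r.
  rewrite mulrDl mul1r lerD2l mulrC ler_pM2l //.
  apply: ler_sum => k _.
  case hk: (k.+1 < N)%N; last by apply: Ind_ge0.
  case: (compare hop (hlam k.+1) K x) => [H|[_ Hth]].
    by rewrite /Ind H.
  rewrite hN ler_pM2r // ler_nat in Hth.
  by move: hk; rewrite ltnNge Hth.
apply: le_trans (avg_ler Hpt) _.
rewrite avgD avg_cst lerD2l.
have -> : avg (fun x => beta * \sum_(k < L) Ind R (lam k.+1 <= Mi (srun (lam k.+1) K x)))
    = beta * \sum_(k < L) P k.+1.
  have AM : forall (a : R) (h : cube -> R), avg (fun x => a * h x) = a * avg h.
    by move=> a h; rewrite mulrC avg_mulr; congr avg; apply: funext => x; rewrite mulrC.
  by rewrite AM avg_sum.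
have -> : beta * \sum_(k < L) P k.+1 = opt / eps * \sum_(k < L) delta * P k.+1.
  rewrite !mulr_sumr; apply: eq_bigr => k _; rewrite /delta mulrA.
  congr (_ * _); field; rewrite !gt_eqF //.
rewrite ler_wpM2l ?divr_ge0 ?(ltW heps) //.
apply: riemann => //.
- exact: Inf_ge0.
- exact: Inf_le1.
- move=> k; split; first by apply: avg_ge0 => x; apply: Ind_ge0.
  by rewrite /P; apply: avg_le => x; rewrite /Ind; case: (lam k <= _); rewrite ?ler01 ?lexx.
- move=> k; have := ville K (_ : 0 <= lam k.+1); rewrite /P /lam; apply.
  by rewrite mulr_ge0 ?ler0n // ltW.
- move=> k hk; rewrite /P.
  transitivity (avg (fun _ : cube => (0 : R))); last exact: avg_cst.
  congr avg; apply: funext => x.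
  have : Mi (srun (lam k) K x) < lam k by apply: le_lt_trans (Mi_le1 _) hk.
  by rewrite /Ind ltNge => /negbTE ->.
Qed.

End Cost.

Theorem mainTheorem2 (R : realType) (n : nat) (f : cube n -> bool)
    (c : 'I_n -> R) (eps beta : R) (sel : state R n -> option 'I_n) :
  (forall i, 0 <= c i) ->
  0 < eps -> eps <= 2^-1 -> 0 < beta ->
  iprr_selector f eps sel ->
  exists K : nat,
    (forall x : cube n, iprr_halted f eps (iprr_run f c eps beta sel x K)) /\
    prob (fun x => iprr_output f (iprr_run f c eps beta sel x K) != f x) <= eps /\
    avg (fun x => l1cost (iprr_run f c eps beta sel x K))
      <= beta * n%:R + opt0w f c / eps * \sum_(i < n) inf_term (Inf f i).
Proof.
move=> hc heps _ hbeta hsel.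
have [K HK] := halting hc heps hbeta hsel.
exists K; split => //; split. have E := err_bound hbeta HK. exact E.
have -> : avg (fun x => l1cost (iprr_run f c eps beta sel x K)) =
          avg (fun x => \sum_i (iprr_run f c eps beta sel x K).1 i).
  congr avg; apply: funext => x; apply: l1cost_eq => j.
  exact: theta_ge0.
rewrite avg_sum.
apply: le_trans (ler_sum _ (fun i _ => coord_bound hc heps hbeta hsel i K)) _.
rewrite big_split /= -mulr_sumr sumr_const card_ord mulr_natr.
exact: lexx.
Qed.
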